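(* Let $A\in\mathbb{C}^{2n\times 2n}$ be a normal per-Hermitian matrix all of whose eigenvalues have nonzero imaginary parts. Then there exist a unitary perplectic matrix $U\in\mathbb{C}^{2n\times 2n}$ and a diagonal matrix $D\in\mathbb{C}^{n\times n}$ such that $$A=U\begin{bmatrix} D & 0\\ 0 & F_nD^HF_n\end{bmatrix}U^H .$$
   Context: For $m\ge1$, $F_m\in\mathbb{R}^{m\times m}$ denotes the flip (exchange) matrix with ones on the antidiagonal and zeros elsewhere. A matrix $A\in\mathbb{C}^{2n\times 2n}$ is per-Hermitian if $(F_{2n}A)^H=F_{2n}A$ and perskew-Hermitian if $(F_{2n}A)^H=-F_{2n}A$. A matrix $Z\in\mathbb{C}^{2n\times 2n}$ is perplectic if $Z^HF_{2n}Z=F_{2n}$; ''unitary perplectic'' means both unitary and perplectic. *)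

(* Defs.v *)
(* Complex matrices are modelled over an arbitrary
   numClosedFieldType C (algebraically closed field with conjugation; e.g. algC). *)
From HB Require Import structures.
From mathcomp Require Import all_boot all_order all_algebra.
Set Implicit Arguments. Unset Strict Implicit. Unset Printing Implicit Defensive.
Import Order.TTheory GRing.Theory Num.Theory.
Local Open Scope ring_scope.
Local Open Scope sesquilinear_scope.

Definition flipmx {C : numClosedFieldType} (m : nat) : 'M[C]_m :=
  \matrix_(i < m, j < m) ((i + j)%N == m.-1)%:R.

Definition perhermitian {C : numClosedFieldType} (k : nat) (A : 'M[C]_k) : Prop :=
  (flipmx k *m A) ^t* = flipmx k *m A.

Definition perplectic {C : numClosedFieldType} (k : nat) (Z : 'M[C]_k) : Prop :=
  Z ^t* *m flipmx k *m Z = flipmx k.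

(* Main.v *)
Require Import Defs.
From HB Require Import structures.
From mathcomp Require Import all_boot all_order all_algebra.
From mathcomp Require Import zify.
Import Order.TTheory GRing.Theory Num.Theory.
Local Open Scope ring_scope.
Local Open Scope sesquilinear_scope.

Section H.
Variable C : numClosedFieldType.

Lemma trC_mul m n p (A : 'M[C]_(m, n)) (B : 'M[C]_(n, p)) :
  (A *m B) ^t* = B ^t* *m A ^t*.
Proof. by rewrite trmx_mul map_mxM. Qed.

Lemma trC_col m1 m2 n (A : 'M[C]_(m1, n)) (B : 'M[C]_(m2, n)) :
  (col_mx A B) ^t* = row_mx (A^t*) (B^t*).
Proof. by rewrite tr_col_mx map_row_mx. Qed.

Lemma flipE m (i j : 'I_m) : (flipmx m : 'M[C]_m) i j = (j == rev_ord i)%:R.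
Proof.
rewrite mxE; suff -> : ((i + j)%N == m.-1) = (j == rev_ord i) by [].
apply/eqP/eqP => [h|->].
  by apply: val_inj => /=; have := ltn_ord i; have := ltn_ord j; lia.
by rewrite /=; have := ltn_ord i; lia.
Qed.

Lemma mulFmx m p (M : 'M[C]_(m, p)) :
  flipmx m *m M = \matrix_(i, j) M (rev_ord i) j.
Proof.
apply/matrixP=> i j; rewrite !mxE (bigD1 (rev_ord i)) //= big1 ?addr0.
  by rewrite flipE eqxx mul1r.
by move=> k /negbTE hk; rewrite flipE hk mul0r.
Qed.

Lemma flipFF m : (flipmx m : 'M[C]_m) *m flipmx m = 1%:M.
Proof.
rewrite mulFmx; apply/matrixP=> i j; rewrite [LHS]mxE flipE rev_ordK mxE eq_sym.
by [].
Qed.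

Lemma flipT m : (flipmx m : 'M[C]_m) ^t* = flipmx m.
Proof. by apply/matrixP=> i j; rewrite !mxE conjC_nat addnC. Qed.

Lemma flip_block n : (flipmx (n + n) : 'M[C]_(n + n)) =
  block_mx 0 (flipmx n) (flipmx n) 0.
Proof.
apply/matrixP=> i j; rewrite -(splitK i) -(splitK j).
case: (split i) => a; case: (split j) => b;
  rewrite ?block_mxEul ?block_mxEur ?block_mxEdl ?block_mxEdr !mxE /=;
  have := ltn_ord a; have := ltn_ord b.
- by move=> ? ?; case: eqP => //; lia.
- by move=> ? ?; congr (_%:R); apply/eqP/eqP; lia.
- by move=> ? ?; congr (_%:R); apply/eqP/eqP; lia.
- by move=> ? ?; case: eqP => //; lia.
Qed.

Lemma rsubC m m' n p q (f : 'I_m' -> 'I_m) (g : 'I_p -> 'I_n)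
   (M : 'M[C]_(m, q)) (N : 'M[C]_(n, q)) :
  rowsub f M *m (rowsub g N)^t* = mxsub f g (M *m N^t*).
Proof. by apply/matrixP=> i j; rewrite !mxE; apply: eq_bigr => k _; rewrite !mxE. Qed.

End H.

Theorem lemma2p6 (C : numClosedFieldType) (n : nat) (A : 'M[C]_(n + n)) :
  A \is normalmx ->
  perhermitian A ->
  (forall a : C, eigenvalue A a -> 'Im a != 0) ->
  exists (U : 'M[C]_(n + n)) (D : 'M[C]_n),
    [/\ U \is unitarymx, perplectic U, is_diag_mx D &
        A = U *m block_mx D 0 0 (flipmx n *m D ^t* *m flipmx n) *m U ^t*].
Proof.
move=> /orthomx_spectralP hA hper hIm.
set P := spectralmx A in hA; set d := spectral_diag A in hA.
have Pu : P \is unitarymx := spectral_unitarymx A.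
have PPt : P *m P^t* = 1%:M := unitarymxP Pu.
have PtP : P^t* *m P = 1%:M := mulmx1C PPt.
rewrite invmx_unitary // in hA.
set F : 'M[C]_(n + n) := flipmx (n + n).
set Fn : 'M[C]_n := flipmx n.
have FF : F *m F = 1%:M by apply: flipFF.
have Ft : F^t* = F by apply: flipT.
have FnFn : Fn *m Fn = 1%:M by apply: flipFF.
have Fnt : Fn^t* = Fn by apply: flipT.
have FA : F *m A = A^t* *m F.
  by move: hper; rewrite /perhermitian -/F trC_mul Ft.
have AH : A^t* = F *m A *m F by rewrite FA -mulmxA FF mulmx1.
set Dl := diag_mx d.
set Dc := diag_mx (map_mx Num.conj d).
have DlC : Dl^t* = Dc by rewrite tr_diag_mx map_diag_mx.
have PA : P *m A = Dl *m P by rewrite hA !mulmxA PPt mul1mx.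
have AP : A *m P^t* = P^t* *m Dl by rewrite hA -!mulmxA PPt mulmx1.
have PAH : P *m A^t* = Dc *m P.
  by rewrite {1}hA !trC_mul trmxCK DlC !mulmxA PPt mul1mx.
set G := P *m F *m P^t*.
have GD : Dc *m G = G *m Dl.
  rewrite /G !mulmxA -PAH AH !mulmxA -(mulmxA _ F F) FF mulmx1.
  by rewrite -(mulmxA _ A) AP !mulmxA.
have Gkl k l : G k l * ((d 0 k)^* - d 0 l) = 0.
  move/matrixP: GD => /(_ k l); rewrite mul_diag_mx mul_mx_diag !mxE => h.
  by rewrite mulrBr -h mulrC subrr.
have eig k : 'Im (d 0 k) != 0.
  apply: hIm; apply/eigenvalueP; exists (row k P).
    by rewrite -row_mul PA row_mul row_diag_mx -scalemxAl -rowE.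
  apply/eqP => h0; move/row_unitarymxP: Pu => /(_ k k).
  by rewrite h0 dotmxE mul0mx mxE eqxx => /esym/eqP; rewrite oner_eq0.
set S := [set k | 0 < 'Im (d 0 k)].
have opp k l : G k l != 0 -> (k \in S) = (l \notin S).
  move=> Hkl; have /eqP := Gkl k l.
  rewrite mulf_eq0 (negbTE Hkl) /= subr_eq0 => /eqP hl.
  rewrite !inE -hl Im_conj oppr_gt0 -real_leNgt ?real0 ?Creal_Im //.
  by rewrite lt_def eig.
set s : 'rV[C]_(n + n) := \row_k (if k \in S then (1 : C) else (-1 : C)).
set Sg := diag_mx s.
have GS : G *m Sg = - (Sg *m G).
  have sE k : s 0 k = if k \in S then (1 : C) else (-1 : C) by rewrite mxE.
  apply/matrixP => k l; rewrite mul_mx_diag mul_diag_mx [LHS]mxE [RHS]mxE [X in - X]mxE !sE.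
  have [->|H] := eqVneq (G k l) 0; first by rewrite mul0r mulr0 oppr0.
  rewrite (opp _ _ H); case: (l \in S) => /=.
    by rewrite mulN1r opprK mulr1.
  by rewrite mulrN1 mul1r.
have GGt : G *m G^t* = 1%:M.
  rewrite /G !trC_mul trmxCK Ft !mulmxA -(mulmxA _ (P^t*) P) PtP mulmx1.
  by rewrite -(mulmxA _ F F) FF mulmx1.
have GtG : G^t* *m G = 1%:M := mulmx1C GGt.
have trS : \tr Sg = 0.
  have h : \tr Sg = - \tr Sg.
    rewrite -{1}[Sg]mul1mx -GtG -mulmxA GS mulmxN linearN /=.
    by rewrite mxtrace_mulC -mulmxA GGt mulmx1.
  apply/eqP; have := mulrn_eq0 (\tr Sg) 2; rewrite /= => <-.
  by rewrite mulr2n {2}h subrr.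
have cardS : #|S| = n.
  move: trS; rewrite mxtrace_diag (bigID (mem S)) /=.
  rewrite (eq_bigr (fun _ => 1)); last by move=> k kS; rewrite mxE kS.
  rewrite [\sum_(i < _ | i \notin S) _](eq_bigr (fun _ => -1)); last by move=> k kS; rewrite mxE (negbTE kS).
  rewrite (eq_bigl (fun i => i \in ~: S)); last by move=> i; rewrite in_setC.
  rewrite !sumr_const mulNrn => /eqP; rewrite subr_eq0 eqr_nat => /eqP h.
  have := cardsC S; rewrite card_ord -h !addnn.
  by move=> h2; apply: double_inj; rewrite h2 -addnn.
pose f (i : 'I_n) : 'I_(n + n) := enum_val (cast_ord (esym cardS) i).
have fS i : f i \in S by exact: enum_valP.
have f_inj : injective f.
  by move=> i j /enum_val_inj /cast_ord_inj.
set X : 'M[C]_(n, n + n) := rowsub f P.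
have XXt : X *m X^t* = 1%:M.
  rewrite /X rsubC PPt; apply/matrixP => i j; rewrite !mxE (inj_eq f_inj).
  by [].
have XFX : X *m F *m X^t* = 0.
  rewrite /X mul_rowsub_mx rsubC -/G; apply/matrixP => i j; rewrite [LHS]mxE [RHS]mxE.
  apply/eqP; apply: contraT => H; move: (opp _ _ H).
  by rewrite !fS.
set r : 'rV[C]_n := \row_i d 0 (f i).
set D : 'M[C]_n := diag_mx r.
set Dc' : 'M[C]_n := diag_mx (map_mx Num.conj r).
have DC : D^t* = Dc' by rewrite tr_diag_mx map_diag_mx.
have XA : X *m A = D *m X.
  rewrite /X mul_rowsub_mx PA; apply/matrixP => i j.
  by rewrite /Dl /Dc /D /Dc' !mul_diag_mx !mxE.
have XAH : X *m A^t* = Dc' *m X.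
  rewrite /X mul_rowsub_mx PAH; apply/matrixP => i j.
  by rewrite /Dl /Dc /D /Dc' !mul_diag_mx !mxE.
set Y : 'M[C]_(n, n + n) := Fn *m X *m F.
have Yt : Y^t* = F *m X^t* *m Fn by rewrite /Y !trC_mul Ft Fnt mulmxA.
set W : 'M[C]_(n + n) := col_mx X Y.
have Wt : W^t* = row_mx (X^t*) (Y^t*) by rewrite /W trC_col.
have XFXt : X *m F *m X^t* = 0 := XFX.
have WWt : W *m W^t* = 1%:M.
  rewrite Wt /W mul_col_row Yt /Y [1%:M]scalar_mx_block; congr block_mx.
  - exact: XXt.
  - by rewrite !mulmxA XFX mul0mx.
  - by rewrite -!mulmxA (mulmxA X F) XFX mulmx0.
  - by rewrite -!mulmxA (mulmxA F F) FF mul1mx (mulmxA X) XXt mul1mx FnFn.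
have WtW : W^t* *m W = 1%:M := mulmx1C WWt.
exists (W^t*), D; split.
- by apply/unitarymxP; rewrite trmxCK.
- have Fb : F = block_mx 0 Fn Fn 0 := flip_block C n.
  rewrite /perplectic trmxCK Wt /W -/F mul_col_mx mul_col_row Yt /Y [RHS]Fb.
  congr block_mx.
  + exact: XFX.
  + by rewrite -!mulmxA (mulmxA F F) FF mul1mx (mulmxA X) XXt mul1mx.
  + by rewrite -!mulmxA (mulmxA F F) FF mul1mx XXt mulmx1.
  + rewrite -!mulmxA (mulmxA F F) FF mul1mx (mulmxA X F) (mulmxA (X *m F)).
    by rewrite XFX mul0mx mulmx0.
- exact: diag_mx_is_diag.
- have WA : W *m A = block_mx D 0 0 (Fn *m D^t* *m Fn) *m W.
    rewrite /W mul_col_mx mul_block_col !mul0mx addr0 add0r /Y.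
    congr col_mx; first exact: XA.
    rewrite DC -!mulmxA FA (mulmxA X) XAH (mulmxA Fn Fn) FnFn mul1mx.
    by rewrite -!mulmxA.
  by rewrite trmxCK -mulmxA -WA mulmxA WtW mul1mx.
Qed.
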